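(* For every integer $d\ge1$, $\operatorname{non}(\mathrm{HDZ})=\operatorname{non}(\mathrm{HDZ}_{\mathbb{R}^d})$ and $\operatorname{cov}(\mathrm{HDZ})=\operatorname{cov}(\mathrm{HDZ}_{\mathbb{R}^d})$.
   Context: $2^\omega$ carries the metric $d(x,y)=2^{-\min\{n:x(n)\neq y(n)\}}$ for $x\neq y$ and $d(x,x)=0$; $\mathbb{R}^d$ carries the Euclidean metric. For a metric space $X$, $A\subseteq X$, $s>0$: $\mathcal{H}^s(A)=\lim_{\delta\to0}\inf\{\sum_n(\operatorname{diam}C_n)^s:A\subseteq\bigcup_nC_n,\ \operatorname{diam}C_n\le\delta\}$, and the Hausdorff dimension is $\dim_H(A)=\inf\{s>0:\mathcal{H}^s(A)=0\}$. $\mathrm{HDZ}_X=\{A\subseteq X:\dim_H(A)=0\}$ and $\mathrm{HDZ}=\mathrm{HDZ}_{2^\omega}$. For an ideal $I$ on $X$, $\operatorname{cov}(I)$ is the least size of a subfamily of $I$ covering $X$ and $\operatorname{non}(I)$ is the least size of a subset of $X$ not in $I$. *)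

(* Defs.v *)
From HB Require Import structures.
From mathcomp Require Import all_boot all_order all_algebra.
From mathcomp Require Import all_classical all_reals all_analysis.
Set Implicit Arguments. Unset Strict Implicit. Unset Printing Implicit Defensive.
Import Order.TTheory GRing.Theory Num.Theory.
Local Open Scope classical_set_scope.
Local Open Scope ring_scope.

Section Hausdorff.
Variables (R : realType) (T : Type) (dist : T -> T -> R).

(* diameter; convention diam set0 = 0 *)
Definition diam (C : set T) : \bar R :=
  ereal_sup ([set 0%E] `|` [set (dist p.1 p.2)%:E | p in C `*` C]).

Definition hausdorff_delta (s delta : R) (A : set T) : \bar R :=
  ereal_inf [set (\sum_(0 <= n <oo) ((fine (diam (C n))) `^ s)%:E)%E
            | C in [set C : nat -> set T |
                    A `<=` \bigcup_n C n /\ forall n, (diam (C n) <= delta%:E)%E]].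

(* H^s(A) = lim_{delta -> 0+} H^s_delta(A); since H^s_delta(A) is
   nonincreasing in delta, this limit is the supremum over delta > 0 *)
Definition hausdorff_measure (s : R) (A : set T) : \bar R :=
  ereal_sup [set hausdorff_delta s delta A | delta in [set delta : R | 0 < delta]].

Definition hausdorff_dim (A : set T) : \bar R :=
  ereal_inf [set s%:E | s in [set s : R | 0 < s /\ hausdorff_measure s A = 0%E]].

Definition HDZ_of : set (set T) := [set A | hausdorff_dim A = 0%E].
End Hausdorff.

Definition cantor_dist (R : realType) (x y : nat -> bool) : R :=
  if pselect (x = y) then 0
  else (2%:R^-1) ^+ (xget 0%N [set n | x n != y n /\ forall k, (k < n)%N -> x k = y k]).

Definition euclid_dist (R : realType) (d : nat) (x y : 'rV[R]_d) : R :=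
  Num.sqrt (\sum_(i < d) (x ord0 i - y ord0 i) ^+ 2).

Definition HDZ (R : realType) : set (set (nat -> bool)) := HDZ_of (@cantor_dist R).
Definition HDZ_Rd (R : realType) (d : nat) : set (set 'rV[R]_d) :=
  HDZ_of (@euclid_dist R d).

(* Cardinal invariants, compared relationally (no type of cardinals is
   available): non(I) <= non(J) iff every set outside J is at least as
   large as some set outside I (cardinals being well-ordered). *)
Definition non_le T U (I : set (set T)) (J : set (set U)) : Prop :=
  forall B : set U, ~ J B -> exists A : set T, ~ I A /\ (A #<= B)%card.
Definition non_eq T U (I : set (set T)) (J : set (set U)) : Prop :=
  non_le I J /\ non_le J I.

Definition cov_le T U (I : set (set T)) (J : set (set U)) : Prop :=
  forall F : set (set U), F `<=` J -> \bigcup_(B in F) B = [set: U] ->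
    exists G : set (set T), [/\ G `<=` I, \bigcup_(A in G) A = [set: T]
                             & (G #<= F)%card].
Definition cov_eq T U (I : set (set T)) (J : set (set U)) : Prop :=
  cov_le I J /\ cov_le J I.
Arguments HDZ R : clear implicits.
Arguments HDZ_Rd R d : clear implicits.

(* Main.v *)
Require Import Defs.
From mathcomp Require Import all_boot all_order all_algebra.
From mathcomp Require Import all_classical all_reals all_analysis.
From HB Require Import structures.
From mathcomp Require Import lra zify ring.
Set Implicit Arguments. Unset Strict Implicit. Unset Printing Implicit Defensive.
Import Order.TTheory GRing.Theory Num.Theory.
Local Open Scope classical_set_scope.
Local Open Scope ring_scope.

Section Gen.
Variables (R : realType) (T : Type) (dist : T -> T -> R).
Local Open Scope ereal_scope.

Lemma diam_ge0 (C : set T) : 0 <= diam dist C.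
Proof. by apply: ereal_sup_ubound; left. Qed.

Lemma diam_le (C : set T) (r : R) : (0 <= r)%R ->
  (forall x y, C x -> C y -> (dist x y <= r)%R) -> diam dist C <= r%:E.
Proof.
move=> r0 H; apply: ge_ereal_sup => z [->|[[x y] [/= Cx Cy] <-]] //.
by rewrite lee_fin H.
Qed.

Lemma dist_le_diam (C : set T) x y : C x -> C y -> (dist x y)%:E <= diam dist C.
Proof. by move=> Cx Cy; apply: ereal_sup_ubound; right; exists (x, y). Qed.

Lemma fine_diam_le (C : set T) (r : R) : diam dist C <= r%:E ->
  (0 <= fine (diam dist C) <= r)%R.
Proof.
move=> H; have H0 := diam_ge0 C.
move: H H0; case: (diam dist C) => //= x; rewrite !lee_fin => a b.
by rewrite a b.
Qed.

Lemma diam_fin (C : set T) (r : R) : diam dist C <= r%:E ->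
  diam dist C = (fine (diam dist C))%:E.
Proof.
move=> H; have H0 := diam_ge0 C.
by move: H H0; case: (diam dist C).
Qed.

Lemma hd_ge0 s delta A : 0 <= hausdorff_delta dist s delta A.
Proof.
apply: le_ereal_inf_tmp => _ [C _ <-]; apply: nneseries_ge0 => n _ _.
by rewrite lee_fin powR_ge0.
Qed.

Lemma hm_eq0 s A : hausdorff_measure dist s A = 0 <->
  forall delta, (0 < delta)%R -> hausdorff_delta dist s delta A = 0.
Proof.
split.
  move=> H delta d0; apply/eqP; rewrite eq_le hd_ge0 andbT -H.
  by apply: ereal_sup_ubound; exists delta.
move=> H; apply/eqP; rewrite eq_le; apply/andP; split.
  by apply: ge_ereal_sup => _ [delta d0 <-]; rewrite (H _ d0).
by apply: le_ereal_sup_tmp; exists 0 => //; exists 1%R; [exact: ltr01 | exact: (H _ ltr01)].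
Qed.

Lemma hd_eq0 s delta A : hausdorff_delta dist s delta A = 0 <->
  forall eps, (0 < eps)%R -> exists C : nat -> set T,
   [/\ A `<=` \bigcup_n C n, (forall n, diam dist (C n) <= delta%:E) &
       \sum_(0 <= n <oo) ((fine (diam dist (C n))) `^ s)%:E < eps%:E].
Proof.
split.
  move=> H eps e0; have : hausdorff_delta dist s delta A < eps%:E by rewrite H lte_fin.
  by move=> /ereal_inf_lt [_ [C [AC Cd] <-] lt]; exists C.
move=> H; apply/eqP; rewrite eq_le hd_ge0 andbT.
apply/lee_addgt0Pr => eps e0; rewrite add0e.
have [C [AC Cd lt]] := H eps e0.
by apply: ge_ereal_inf; eexists; [exists C | apply: ltW lt].
Qed.

End Gen.

Section Gen2.
Variables (R : realType).
Local Open Scope ereal_scope.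

Lemma powR_anti (c s t : R) : (0 <= c <= 1)%R -> (0 < s)%R -> (s <= t)%R ->
  (c `^ t <= c `^ s)%R.
Proof.
move=> /andP[c0 c1] s0 st; have [->|cn0] := eqVneq c 0%R.
  by rewrite !powR0 // gt_eqF // (lt_le_trans s0 st).
by apply: ger_powR => //; rewrite c1 andbT lt_def cn0 c0.
Qed.

Lemma hm_mono (T : Type) (dist : T -> T -> R) (A : set T) (s t : R) :
  (0 < s)%R -> (s <= t)%R -> hausdorff_measure dist s A = 0 ->
  hausdorff_measure dist t A = 0.
Proof.
move=> s0 st /hm_eq0 H; apply/hm_eq0 => delta d0; apply/hd_eq0 => eps e0.
have d1 : (0 < Num.min delta 1)%R by rewrite lt_min d0 ltr01.
have /hd_eq0 /(_ eps e0) [C [AC Cd lt]] := H _ d1.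
exists C; split => //.
  move=> n; apply: (le_trans (Cd n)); rewrite lee_fin ge_min lexx //.
apply: le_lt_trans lt; apply: lee_nneseries => n _.
  by rewrite lee_fin powR_ge0.
rewrite lee_fin; apply: powR_anti => //.
have /fine_diam_le /andP[c0 c1] := Cd n.
rewrite c0 /=; apply: (le_trans c1); rewrite ge_min lexx orbT //.
Qed.


Lemma HDZP (T : Type) (dist : T -> T -> R) (A : set T) :
  HDZ_of dist A <-> forall s, (0 < s)%R -> hausdorff_measure dist s A = 0.
Proof.
rewrite /HDZ_of /hausdorff_dim; split.
  move=> H s s0.
  have : ereal_inf [set s%:E | s in [set s | (0 < s)%R /\ hausdorff_measure dist s A = 0]] < s%:E.
    by rewrite H lte_fin.
  move=> /ereal_inf_lt [_ [t [t0 Ht] <-]]; rewrite lte_fin => ts.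
  exact: (hm_mono t0 (ltW ts) Ht).
move=> H; apply/eqP; rewrite eq_le; apply/andP; split.
  apply/lee_addgt0Pr => e e0; rewrite add0e.
  by apply: ereal_inf_lbound; exists e => //; split => //; exact: H.
by apply: le_ereal_inf_tmp => _ [t [t0 _] <-]; rewrite lee_fin ltW.
Qed.

End Gen2.

Section Holder.
Variables (R : realType).
Local Open Scope ereal_scope.

Lemma lteZ_helper (c e : R) (X : \bar R) : (0 < c)%R -> 0 <= X -> X < e%:E ->
  c%:E * X < (c * e)%:E.
Proof.
move=> c0; case: X => // x; rewrite !lee_fin !lte_fin => _ xe.
by rewrite ltr_pM2l.
Qed.

Lemma holder_transfer (T1 T2 : Type) (d1 : T1 -> T1 -> R) (d2 : T2 -> T2 -> R)
  (A : set T1) (S : set T2) (g : T2 -> T1) (K gam : R) :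
  (forall x y, 0 <= d1 x y)%R -> (0 < K)%R -> (0 < gam)%R ->
  (forall x, S x -> A (g x)) ->
  (forall x y, S x -> S y -> d2 x y <= (K * d1 (g x) (g y)) `^ gam)%R ->
  HDZ_of d1 A -> HDZ_of d2 S.
Proof.
move=> d10 K0 g0 SA Hd /HDZP HA; apply/HDZP => s s0.
apply/hm_eq0 => delta de0; apply/hd_eq0 => eps e0.
have t0 : (0 < gam * s)%R by rewrite mulr_gt0.
pose d1' := (delta `^ gam^-1 / K)%R.
have d1'0 : (0 < d1')%R by rewrite divr_gt0 // powR_gt0.
have Kd : ((K * d1') `^ gam = delta)%R.
  rewrite /d1' mulrC divfK ?gt_eqF // -powRrM mulVf ?gt_eqF // powRr1 //.
  exact: ltW.
pose e1 := (eps / K `^ (gam * s))%R.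
have e10 : (0 < e1)%R by rewrite divr_gt0 // powR_gt0.
have /hm_eq0 /(_ _ d1'0) /hd_eq0 /(_ _ e10) [C [AC Cd lt]] := HA _ t0.
have cb n : (0 <= fine (diam d1 (C n)) <= d1')%R by apply: fine_diam_le.
pose D n := S `&` (g @^-1` C n).
have Dd n : diam d2 (D n) <= ((K * fine (diam d1 (C n))) `^ gam)%:E.
  apply: diam_le; first exact: powR_ge0.
  move=> x y [Sx Cx] [Sy Cy]; apply: (le_trans (Hd _ _ Sx Sy)).
  apply: (ge0_ler_powR (ltW g0)); rewrite ?nnegrE.
  - by apply: mulr_ge0; [exact: ltW | exact: d10].
  - by apply: mulr_ge0; [exact: ltW | case/andP: (cb n)].
  rewrite ler_pM2l //; have := dist_le_diam d1 Cx Cy.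
  by rewrite (diam_fin (Cd n)) lee_fin.
exists D; split.
- move=> x Sx; have [n _ Cn] := AC _ (SA _ Sx); by exists n.
- move=> n; apply: (le_trans (Dd n)); rewrite lee_fin -Kd.
  apply: (ge0_ler_powR (ltW g0)); rewrite ?nnegrE.
  + by apply: mulr_ge0; [exact: ltW | case/andP: (cb n)].
  + by apply: mulr_ge0; exact: ltW.
  by rewrite ler_pM2l //; case/andP: (cb n).
- apply: (@le_lt_trans _ _ (\sum_(0 <= n <oo)
     ((K `^ (gam * s))%:E * ((fine (diam d1 (C n))) `^ (gam * s))%:E))).
    apply: lee_nneseries => n _; first by rewrite lee_fin powR_ge0.
    rewrite -EFinM lee_fin.
    have /fine_diam_le/andP[a b] := Dd n.
    apply: (le_trans (ge0_ler_powR (ltW s0) _ _ b)); rewrite ?nnegrE //.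
      exact: powR_ge0.
    rewrite -powRrM powRM //; first exact: ltW.
    by case/andP: (cb n).
  rewrite nneseriesZl; last by move=> n _; rewrite lee_fin powR_ge0.
  apply: (lt_le_trans (lteZ_helper (powR_gt0 (gam * s) K0) _ lt)).
    by apply: nneseries_ge0 => n _ _; rewrite lee_fin powR_ge0.
  by rewrite lee_fin /e1 mulrC divfK // gt_eqF // powR_gt0.
Qed.

End Holder.

Definition dm (T : Type) (t : T) : Type := T.
HB.instance Definition _ (T : Type) (t : T) := gen_eqMixin (dm t).
HB.instance Definition _ (T : Type) (t : T) := gen_choiceMixin (dm t).
HB.instance Definition _ (T : Type) (t : T) := isPointed.Build (dm t) t.
Section S.
Variables (T : Type) (t : T).
Definition mset : set (set (dm t)) := setT.
Lemma mset0 : mset set0. Proof. by []. Qed.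
Lemma msetI : setI_closed mset. Proof. by []. Qed.
Lemma msetD : semi_setD_closed mset.
Proof. by apply: setD_semi_setD_closed. Qed.
HB.instance Definition _ := @isSemiRingOfSets.Build default_measure_display (dm t) mset mset0 msetI msetD.
End S.

Section Sigma.
Variables (R : realType) (T : Type) (t : T) (dist : T -> T -> R).
Local Open Scope ereal_scope.

Lemma HDZ_bigcup (A : nat -> set T) :
  (forall m, HDZ_of dist (A m)) -> HDZ_of dist (\bigcup_m A m).
Proof.
move=> HA; apply/HDZP => s s0; apply/hm_eq0 => delta d0.
pose mu : set (dm t : semiRingOfSetsType _) -> \bar R := fun C =>
  if diam dist C <= delta%:E then ((fine (diam dist C)) `^ s)%:E else +oo.
have mu0 X : 0 <= mu X by rewrite /mu; case: ifP; rewrite ?lee_fin ?powR_ge0 ?leey.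
have c1 (X : set T) : mu_ext mu X <= hausdorff_delta dist s delta X.
  apply: ereal_inf_le_tmp => _ [C [XC Cd] <-]; exists C; first by split.
  by apply: eq_eseriesr => n _; rewrite /mu Cd.
have c2 (X : set T) : hausdorff_delta dist s delta X <= mu_ext mu X.
  apply: le_ereal_inf_tmp => _ [F [_ XF] <-].
  have [Fd|] := pselect (forall k, diam dist (F k) <= delta%:E).
    apply: ereal_inf_lbound; exists F; first by split.
    by apply: eq_eseriesr => n _; rewrite /mu Fd.
  move=> /existsNP [k Fk].
  rewrite (@eseries_pinfty _ _ _ k) ?leey //.
    by move=> n _; rewrite gt_eqF // (lt_le_trans _ (mu0 _)) // ltNyr.
  by rewrite /mu ifF //; apply/negbTE/negP.
apply/eqP; rewrite eq_le hd_ge0 andbT.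
apply: (le_trans (c2 _)).
apply: (le_trans (mu_ext_sigma_subadditive mu0 _)).
rewrite eseries0 // => m _ _; apply/eqP; rewrite eq_le mu_ext_ge0 // andbT.
apply: (le_trans (c1 _)); rewrite le_eqVlt; apply/orP; left; apply/eqP.
by move/HDZP: (HA m) => /(_ _ s0) /hm_eq0 /(_ _ d0).
Qed.

End Sigma.

Lemma arith1 (R : realType) (a b c d : R) : b <= c + d / 4%:R / 3%:R -> c + d / 4%:R <= a -> d / 6%:R <= a - b.
Proof. lra. Qed.
Section Cantor.
Variable R : realType.

Lemma cantor_dist_ge0 (x y : nat -> bool) : 0 <= cantor_dist R x y.
Proof.
rewrite /cantor_dist; case: (pselect (x = y)) => [_|_] //.
Qed.

Lemma cantor_dist_ne (x y : nat -> bool) : x <> y -> exists p,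
  [/\ x p <> y p, (forall k, (k < p)%N -> x k = y k) &
      cantor_dist R x y = (2%:R^-1) ^+ p].
Proof.
move=> xy.
have ex : exists n, x n != y n.
  apply: contra_notP xy => H; apply/funext => n.
  by apply/eqP/negPn/negP => hn; apply: H; exists n.
pose p := ex_minn ex.
have [pP pmin] : x p != y p /\ forall k, x k != y k -> (p <= k)%N.
  by rewrite /p; case: ex_minnP.
have agree k : (k < p)%N -> x k = y k.
  move=> kp; apply/eqP/negPn/negP => /pmin; by rewrite leqNgt kp.
exists p; split => //; first exact/eqP.
rewrite /cantor_dist; destruct (pselect (x = y)) as [e|ne]; first by []. congr (_ ^+ _).
apply: xget_unique; first by split.
move=> n [nP nagree]; apply/eqP; rewrite eqn_leq pmin // andbT leqNgt.
apply/negP => np; move: pP; rewrite (nagree _ np) eqxx //.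
Qed.

Lemma euclid_dist_ge0 d (x y : 'rV[R]_d) : 0 <= euclid_dist x y.
Proof. exact: sqrtr_ge0. Qed.

Definition q4 : R := 4%:R^-1.

Definition Sx (x : nat -> bool) (N : nat) : R :=
  \sum_(0 <= k < N) (x k)%:R * q4 ^+ k.+1.

Lemma q4_ge0 : 0 <= q4. Proof. by rewrite /q4 invr_ge0. Qed.

Lemma Sgrow x M j : Sx x M <= Sx x (M + j) <=
  Sx x M + q4 ^+ M / 3%:R - q4 ^+ (M + j) / 3%:R.
Proof.
elim: j => [|j IH]; first by rewrite addn0 lexx /=; lra.
rewrite addnS /Sx big_nat_recr //= -/(Sx x (M + j)).
rewrite -/(Sx x M); move: IH; set a := Sx x M; set b := Sx x (M + j) => /andP[h1 h2].
have q0 : 0 <= q4 ^+ (M + j) by apply: exprn_ge0; exact: q4_ge0.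
have e : q4 ^+ (M + j).+1 = q4 ^+ (M + j) / 4%:R by rewrite exprSr.
have xb : 0 <= ((x (M + j))%:R : R) <= 1 by case: (x (M + j)); rewrite /= ?ler01 ?lexx.
rewrite e; move: xb; set c := (x (M + j))%:R; set Q := q4 ^+ (M + j) => /andP[c0 c1].
have cQ : 0 <= c * (Q / 4%:R) by apply: mulr_ge0 => //; apply: divr_ge0.
have cQ2 : c * (Q / 4%:R) <= Q / 4%:R.
  by rewrite -[leRHS]mul1r; apply: ler_wpM2r => //; apply: divr_ge0.
apply/andP; split; first by lra.
move: h2 cQ2; rewrite -/Q; lra.
Qed.

Lemma Sx_bnd x N : 0 <= Sx x N <= 3%:R^-1.
Proof.
have := Sgrow x 0 N; rewrite /Sx big_geq // add0n expr0 => /andP[-> h] /=.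
have : 0 <= q4 ^+ N by apply: exprn_ge0; exact: q4_ge0.
move: h; rewrite /Sx; lra.
Qed.

Definition Ex (x : nat -> bool) : R := sup (range (Sx x)).

Lemma Ex_ge x N : Sx x N <= Ex x.
Proof.
apply: ub_le_sup; last by exists N.
by exists 3%:R^-1 => _ [n _ <-]; case/andP: (Sx_bnd x n).
Qed.

Lemma Ex_le x b : (forall N, Sx x N <= b) -> Ex x <= b.
Proof. by move=> H; apply: ge_sup; [exists (Sx x 0), 0%N | move=> _ [n _ <-]]. Qed.

Lemma Ex_gap x y p : x p = true -> y p = false ->
  (forall k, (k < p)%N -> x k = y k) -> q4 ^+ p / 6%:R <= Ex x - Ex y.
Proof.
move=> xp yp agree.
have eP : Sx x p = Sx y p.
  by apply: eq_big_nat => k /andP[_ kp]; rewrite agree.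
idtac "A".
have Sxp : Sx x p.+1 = Sx x p + q4 ^+ p.+1 by rewrite /Sx big_nat_recr //= xp mul1r.
have Syp : Sx y p.+1 = Sx y p by rewrite /Sx big_nat_recr //= yp mul0r addr0.
idtac "B".
have q0 : 0 <= q4 ^+ p.+1 by apply: exprn_ge0; exact: q4_ge0.
have Ey : Ex y <= Sx y p + q4 ^+ p.+1 / 3%:R.
  apply: Ex_le => N; have [Np|pN] := leqP N p.+1.
    have := Sgrow y N (p.+1 - N); rewrite subnKC // Syp => /andP[h _].
    idtac "C".
    apply: (le_trans h); move: q0; generalize (q4 ^+ p.+1) (Sx y p) => a b.
    idtac "D".
    clear. lra.
  have := Sgrow y p.+1 (N - p.+1).
  idtac "E".
  rewrite subnKC; last exact: ltnW.
  idtac "F".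
  rewrite Syp => /andP[_ h].
  apply: (le_trans h); have : 0 <= q4 ^+ N by apply: exprn_ge0; exact: q4_ge0.
  idtac "G".
  move: q0; generalize (q4 ^+ p.+1) (Sx y p) (q4 ^+ N) => a b c.
  clear.
  by move=> _ c0; rewrite gerBl divr_ge0.
have Ex1 := Ex_ge x p.+1.
have e : q4 ^+ p.+1 = q4 ^+ p / 4%:R by rewrite exprSr.
rewrite e in Ey Sxp; rewrite Sxp eP in Ex1.
exact: (arith1 Ey Ex1).
Qed.
End Cantor.

Section Digits.
Variable R : realType.

Definition fl (k : nat) (v : R) : int := Num.floor (v * 2%:R ^+ k).
Definition bitk (k : nat) (v : R) : bool := fl k.+1 v - 2 * fl k v == 1.

Lemma fl_step k v : fl k.+1 v = 2 * fl k v \/ fl k.+1 v = 2 * fl k v + 1.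
Proof.
rewrite /fl exprSr mulrA; set y := v * 2%:R ^+ k.
have /andP[a b] := floor_itv y.
have h1 : 2 * Num.floor y <= Num.floor (y * 2%:R).
  by rewrite floor_ge_int rmorphM /= mulrC ler_pM2r.
have h2 : Num.floor (y * 2%:R) < 2 * Num.floor y + 2.
  rewrite floor_lt_int rmorphD rmorphM /=.
  move: b; rewrite rmorphD /= => b.
  have -> : (2 : int)%:~R = 2%:R :> R by [].
  lra.
lia.
Qed.

Lemma fl_agree v w K : fl 0 v = fl 0 w ->
  (forall k, (k < K)%N -> bitk k v = bitk k w) -> fl K v = fl K w.
Proof.
move=> h0; elim: K => [//|K IH] H.
have e := IH (fun k kK => H k (ltnW kK)).
have := H K (ltnSn K); rewrite /bitk e.
case: (fl_step K v) => ->; case: (fl_step K w) => ->; rewrite e; lia.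
Qed.

Lemma fl_close v w K : fl K v = fl K w -> `|v - w| < (2%:R^-1) ^+ K.
Proof.
rewrite /fl => e.
have /andP[a b] := floor_itv (v * 2%:R ^+ K).
have /andP[c d] := floor_itv (w * 2%:R ^+ K).
rewrite e in a b.
have p0 : 0 < (2%:R : R) ^+ K by apply: exprn_gt0.
have : `|v * 2%:R ^+ K - w * 2%:R ^+ K| < 1.
  move: a b c d; rewrite rmorphD /=; set f := (Num.floor _)%:~R.
  move=> a b c d; rewrite ltr_norml; apply/andP; split; lra.
rewrite -mulrBl normrM (gtr0_norm p0) -ltr_pdivlMr // mul1r.
by rewrite exprVn.
Qed.

End Digits.

Section Cantor2.
Variable R : realType.

Lemma half2 : ((2%:R : R)^-1) ^+ 2 = q4 R.
Proof. by rewrite /q4 exprVn -natrX. Qed.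

Lemma cantor_le_E (x y : nat -> bool) :
  cantor_dist R x y <= (6%:R * `|Ex R x - Ex R y|) `^ 2^-1.
Proof.
have [->|xy] := pselect (x = y).
  by rewrite /cantor_dist; destruct (pselect (y = y)) as [e|ne]; [exact: powR_ge0|].
have [p [xpy agree ->]] := cantor_dist_ne R xy.
have key : q4 R ^+ p / 6%:R <= `|Ex R x - Ex R y|.
  case Hx : (x p); case Hy : (y p); rewrite ?Hx ?Hy in xpy => //.
    by apply: (le_trans (Ex_gap R Hx Hy agree)); exact: ler_norm.
  rewrite distrC; apply: (le_trans (Ex_gap R Hy Hx _)); last exact: ler_norm.
  by move=> k kp; rewrite agree.
rewrite powR12_sqrt; last by rewrite mulr_ge0.
have c0 : 0 <= (2%:R : R)^-1 ^+ p by apply: exprn_ge0; rewrite invr_ge0.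
rewrite -(ger0_norm c0) -sqrtr_sqr ler_sqrt; last by rewrite mulr_ge0.
rewrite -exprM mulnC exprM half2.
rewrite -ler_pdivrMl ?ltr0n // mulrC; exact: key.
Qed.

Definition eR d (x : nat -> bool) : 'rV[R]_d.+1 :=
  \row_i (if i == ord0 then Ex R x else 0).

Lemma euclid_e d (x y : nat -> bool) :
  euclid_dist (eR d x) (eR d y) = `|Ex R x - Ex R y|.
Proof.
rewrite /euclid_dist big_ord_recl !mxE /= big1 ?addr0 ?sqrtr_sqr //.
by move=> i _; rewrite !mxE /= subrr expr0n.
Qed.

Lemma cantor_holder d (x y : nat -> bool) :
  cantor_dist R x y <= (6%:R * euclid_dist (eR d x) (eR d y)) `^ 2^-1.
Proof. by rewrite euclid_e; exact: cantor_le_E. Qed.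

End Cantor2.

Lemma pow_bound (R : realType) (a b : R) (N : nat) : 0 <= a -> 0 <= b ->
  a ^+ N.+1 <= b -> a <= b `^ (N.+1%:R^-1).
Proof.
move=> a0 b0 h.
have -> : a = (a ^+ N.+1) `^ (N.+1%:R^-1).
  by rewrite -powR_mulrn // -powRrM mulfV ?pnatr_eq0 // powRr1.
apply: ge0_ler_powR => //; rewrite ?nnegrE ?invr_ge0 ?ler0n //.
exact: exprn_ge0.
Qed.

Lemma archi_half (R : realType) (a C : R) :
  (forall P, a <= C * (2%:R^-1) ^+ P) -> a <= 0.
Proof.
move=> H; rewrite leNgt; apply/negP => a0.
have C0 : 0 <= C by have := H 0%N; rewrite expr0 mulr1 => h; lra.
pose P := Num.truncn (C / a).
have h1 : C / a < P.+1%:R by exact: truncnS_gt.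
have h2 : (P.+1%:R : R) <= 2%:R ^+ P.
  by rewrite -natrX ler_nat; apply: ltn_expl.
have h3 := H P.
have hp : 0 < (2%:R : R) ^+ P by apply: exprn_gt0.
move: h3; rewrite exprVn => h3.
have : a * 2%:R ^+ P <= C.
  by rewrite ler_pdivlMr // in h3.
move: h1; rewrite ltr_pdivrMr // => h1.
have : a * P.+1%:R <= a * 2%:R ^+ P by rewrite ler_pM2l.
lra.
Qed.

Section Box.
Variables (R : realType) (d : nat).

Definition Mr (m : nat) : R := m.+1%:R.
Definition box m : set 'rV[R]_d.+1 := [set s | forall i, - Mr m <= s ord0 i < Mr m].
Definition uc m (s : 'rV[R]_d.+1) (i : 'I_d.+1) : R := (s ord0 i + Mr m) / (2%:R * Mr m).
Definition hmap m (s : 'rV[R]_d.+1) : nat -> bool :=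
  fun n => bitk (n %/ d.+1)%N (uc m s (inord (n %% d.+1)%N)).

Lemma Mr_gt0 m : 0 < Mr m. Proof. by rewrite /Mr ltr0n. Qed.

Lemma uc_fl0 m s i : box m s -> fl 0 (uc m s i) = 0.
Proof.
move=> /(_ i) /andP[a b]; apply/eqP; rewrite /fl expr0 mulr1 floor_eq /=.
have M0 := Mr_gt0 m.
have hM : 0 < 2%:R * Mr m by rewrite mulr_gt0.
rewrite /uc ler_pdivlMr // ltr_pdivrMr // mul0r add0r mul1r.
apply/andP; split; lra.
Qed.

Lemma h_agree m s t P : box m s -> box m t ->
  (forall n, (n < P)%N -> hmap m s n = hmap m t n) ->
  forall i, `|s ord0 i - t ord0 i| <= 2%:R * Mr m * (2%:R^-1) ^+ (P %/ d.+1)%N.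
Proof.
move=> bs bt H i.
set K := (P %/ d.+1)%N.
have bk k : (k < K)%N -> bitk k (uc m s i) = bitk k (uc m t i).
  move=> kK.
  have iP : (k * d.+1 + i < P)%N.
    have := ltn_ord i; have : (k.+1 * d.+1 <= K * d.+1)%N by rewrite leq_mul2r kK orbT.
    have : (K * d.+1 <= P)%N by rewrite /K leq_trunc_div.
    rewrite mulSn; lia.
  have := H _ iP; rewrite /hmap.
  rewrite divnMDl // divn_small // addn0 modnMDl modn_small // inord_val //.
have e := fl_agree (etrans (uc_fl0 i bs) (esym (uc_fl0 i bt))) bk.
have := fl_close e.
have M0 := Mr_gt0 m.
have hM : 0 < 2%:R * Mr m by rewrite mulr_gt0.
rewrite /uc -mulrBl opprD addrACA subrr addr0 normrM (@gtr0_norm _ (2%:R * Mr m)^-1); last by rewrite invr_gt0.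
rewrite ltr_pdivrMr // => h; apply: ltW; by rewrite mulrC.
Qed.


Definition Kc m : R := (2%:R * (d.+1%:R * (2%:R * Mr m))) ^+ d.+1.

Lemma half_pow_shift (K P : nat) : (P <= K * d.+1 + d.+1)%N ->
  (2%:R^-1 : R) ^+ (K * d.+1) <= 2%:R ^+ d.+1 * (2%:R^-1) ^+ P.
Proof.
move=> hP.
have -> : (2%:R^-1 : R) ^+ (K * d.+1) = 2%:R ^+ d.+1 * (2%:R^-1) ^+ (K * d.+1 + d.+1).
  by rewrite exprD mulrCA -exprMn mulfV ?pnatr_eq0 // expr1n mulr1.
rewrite ler_pM2l ?exprn_gt0 ?ltr0n //.
apply: ler_wiXn2l => //.
by rewrite invf_le1 ?ltr0n // ler1n.
Qed.

Lemma h_euclid m s t P : box m s -> box m t ->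
  (forall n, (n < P)%N -> hmap m s n = hmap m t n) ->
  euclid_dist s t ^+ d.+1 <= Kc m * (2%:R^-1) ^+ P.
Proof.
move=> bs bt H.
set K := (P %/ d.+1)%N.
set c := 2%:R * Mr m * (2%:R^-1 : R) ^+ K.
have c0 : 0 <= c by rewrite mulr_ge0 ?exprn_ge0 ?invr_ge0 ?ler0n // mulr_ge0 ?ler0n // ltW // Mr_gt0.
have hagree := h_agree bs bt H; rewrite -/K in hagree.
move: c0 hagree; rewrite -/c => c0 hagree.
have cdef : c = 2%:R * Mr m * (2%:R^-1 : R) ^+ K by [].
clearbody c.
have hi i : (s ord0 i - t ord0 i) ^+ 2 <= c ^+ 2.
  rewrite -real_normK ?num_real // ler_pXn2r // ?nnegrE //.
have hsum : \sum_(i < d.+1) (s ord0 i - t ord0 i) ^+ 2 <= (d.+1%:R * c) ^+ 2.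
  apply: (le_trans (ler_sum _ (fun i _ => hi i))).
  rewrite sumr_const card_ord exprMn -[c ^+ 2 *+ _]mulr_natl.
  apply: ler_wpM2r; first exact: exprn_ge0.
  rewrite expr2 -natrM ler_nat; lia.
have he : euclid_dist s t <= d.+1%:R * c.
  rewrite /euclid_dist -(@ger0_norm _ (d.+1%:R * c)); last by rewrite mulr_ge0.
  by rewrite -sqrtr_sqr ler_sqrt // exprn_ge0 // mulr_ge0.
have he2 : euclid_dist s t ^+ d.+1 <= (d.+1%:R * c) ^+ d.+1.
  by rewrite ler_pXn2r // ?nnegrE ?euclid_dist_ge0 ?mulr_ge0.
apply: (le_trans he2).
rewrite cdef /Kc !exprMn -exprM.
have hP : (P <= K * d.+1 + d.+1)%N.
  by rewrite /K; have := ltn_pmod P (ltn0Sn d); have := divn_eq P d.+1; lia.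
have hs := half_pow_shift hP.
move: hs; set a := (d.+1%:R : R) ^+ d.+1; set b := (2%:R : R) ^+ d.+1.
set mm := Mr m ^+ d.+1; set x := (2%:R^-1 : R) ^+ (K * d.+1); set y := (2%:R^-1 : R) ^+ P.
move=> hs.
have a0 : 0 <= a by rewrite exprn_ge0.
have b0 : 0 <= b by rewrite exprn_ge0.
have m0 : 0 <= mm by rewrite exprn_ge0 // ltW // Mr_gt0.
have -> : a * (b * mm * x) = (a * b * mm) * x by ring.
have -> : b * (a * (b * mm)) * y = (a * b * mm) * (b * y) by ring.
by apply: ler_wpM2l => //; rewrite !mulr_ge0.
Qed.


Lemma Kc_gt0 m : 0 < Kc m.
Proof. by rewrite /Kc exprn_gt0 // !mulr_gt0 ?ltr0n // Mr_gt0. Qed.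

Lemma h_holder m s t : box m s -> box m t ->
  euclid_dist s t <= (Kc m * cantor_dist R (hmap m s) (hmap m t)) `^ (d.+1%:R^-1).
Proof.
move=> bs bt.
have Kc0 := Kc_gt0 m.
have [e|ne] := pselect (hmap m s = hmap m t).
  have h0 : euclid_dist s t ^+ d.+1 <= 0.
    apply: (@archi_half _ _ (Kc m)) => P; apply: h_euclid => // n _; by rewrite e.
  have : euclid_dist s t ^+ d.+1 = 0.
    by apply/eqP; rewrite eq_le h0 exprn_ge0 // euclid_dist_ge0.
  move/eqP; rewrite expf_eq0 /= => /eqP ->; exact: powR_ge0.
have [p [_ agree ->]] := cantor_dist_ne R ne.
apply: pow_bound; first exact: euclid_dist_ge0.
  by apply: mulr_ge0; [exact: ltW | apply: exprn_ge0; rewrite invr_ge0 ler0n].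
exact: h_euclid.
Qed.

Lemma box_cover (s : 'rV[R]_d.+1) : exists m, box m s.
Proof.
exists (Num.truncn (\sum_i `|s ord0 i|)) => i.
have h1 : `|s ord0 i| <= \sum_i `|s ord0 i|.
  by rewrite (bigD1 i) //= lerDl sumr_ge0.
have h2 := truncnS_gt (\sum_i `|s ord0 i|).
rewrite /Mr; have := ler_norm (s ord0 i); have := ler_norm (- s ord0 i).
rewrite normrN.
move: h1 h2; set S := \sum_i _; set N := _%:R; move=> h1 h2 a b.
apply/andP; split; lra.
Qed.

End Box.

Theorem theorem2p11 (R : realType) (d : nat) (hd : (1 <= d)%N) :
  non_eq (HDZ R) (HDZ_Rd R d) /\ cov_eq (HDZ R) (HDZ_Rd R d).
Proof.
case: d hd => [//|d] _.
have gam0 : (0 : R) < d.+1%:R^-1 by rewrite invr_gt0 ltr0n.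
have half0 : (0 : R) < 2%:R^-1 by rewrite invr_gt0 ltr0n.
have six0 : (0 : R) < 6%:R by rewrite ltr0n.
have cd0 := @cantor_dist_ge0 R.
have ed0 := @euclid_dist_ge0 R d.+1.
rewrite /non_eq /cov_eq /HDZ /HDZ_Rd; split; split.
- move=> B nB.
  have [m nBm] : exists m, ~ HDZ_of (@euclid_dist R d.+1) (B `&` @box R d m).
    apply: contra_notP nB => H; have H' : forall m, HDZ_of (@euclid_dist R d.+1) (B `&` @box R d m).
      by move=> m; apply: contra_notP H => h; exists m.
    have -> : B = \bigcup_m (B `&` @box R d m).
      apply/seteqP; split => [x Bx|x [m _ [Bx _]] //].
      by have [m bm] := box_cover x; exists m.
    exact: (HDZ_bigcup (0 : 'rV[R]_d.+1) H').
  exists (hmap m @` (B `&` @box R d m)); split.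
    move=> hA; apply: nBm.
    apply: (holder_transfer (@cantor_dist_ge0 R) (Kc_gt0 R d m) gam0 _ _ hA).
      by move=> x Sx; exists x.
    by move=> x y [_ bx] [_ by_]; apply: h_holder.
  apply: (card_le_trans (card_image_le _ _)); exact: subset_card_le.
- move=> B nB; exists (eR R d @` B); split; last exact: card_image_le.
  move=> hA; apply: nB.
  apply: (holder_transfer ed0 six0 half0 _ _ hA); first by move=> x Bx; exists x.
  by move=> x y _ _; apply: cantor_holder.
- move=> F FJ FT; exists ((fun B => eR R d @^-1` B) @` F); split.
  + move=> _ [B FB <-]; apply: (holder_transfer (g := eR R d) ed0 six0 half0 _ _ (FJ _ FB)) => //.
    by move=> x y _ _; apply: cantor_holder.
  + apply/seteqP; split => // x _.
    have : (\bigcup_(B in F) B) (eR R d x) by rewrite FT.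
    by move=> [B FB Bx]; exists (eR R d @^-1` B) => //; exists B.
  + exact: card_image_le.
- move=> F FI FT.
  exists ((fun B => \bigcup_m (@box R d m `&` hmap m @^-1` B)) @` F); split.
  + move=> _ [B FB <-]; apply: (HDZ_bigcup (0 : 'rV[R]_d.+1)) => m.
    apply: (holder_transfer (g := hmap m) (@cantor_dist_ge0 R) (Kc_gt0 R d m) gam0 _ _ (FI _ FB)).
      by move=> x [_ hx].
    by move=> x y [bx _] [by_ _]; apply: h_holder.
  + apply/seteqP; split => // s _.
    have [m bm] := box_cover s.
    have : (\bigcup_(B in F) B) (hmap m s) by rewrite FT.
    move=> [B FB Bs]; exists (\bigcup_m (@box R d m `&` hmap m @^-1` B)).
      by exists B.
    by exists m.
  + exact: card_image_le.
Qed.
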